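(* In the setting below (disjoint parameter spaces), let $\widehat\Xi_n=\sum_{m\in\mathcal{M}_n}\widehat\gamma_{n,m}\widehat\Xi_{n,m}$ with $\widehat\Xi_{n,m}\in\operatorname{argmin}_{\Xi\in\mathbb{V}_{n,m}}\mathcal{E}(\Xi,\Pi_{n,m},q_n,Y^{(n)})$ and $\widehat\gamma_{n,m}\propto\alpha_{n,m}\exp(-\mathcal{E}(\widehat\Xi_{n,m},\Pi_{n,m},q_n,Y^{(n)}))$ normalized to sum to one, and let $\widehat\alpha_{n,m}:=\Pi_n(\theta\in\Theta_{n,m}\mid Y^{(n)})$. Then $$\Big(\sum_{m\in\mathcal{M}_n}|\widehat\gamma_{n,m}-\widehat\alpha_{n,m}|\Big)^2\le 2\,\mathrm{KL}\big(\widehat\Xi_n,\Pi_n(\cdot\mid Y^{(n)})\big).$$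
   Context: Setting: $\mathfrak{Y}_n$ is a measurable space with $\sigma$-finite measure $\mu_n$; $q_n:\Lambda_n\times\mathfrak{Y}_n\to[0,\infty)$ is a likelihood ($\int q_n(\lambda,\cdot)d\mu_n=1$); $\mathcal{M}_n$ is countable; $\{\Theta_{n,m}\}_{m\in\mathcal{M}_n}$ are pairwise disjoint; $T_n:\bigcup_m\Theta_{n,m}\to\Lambda_n$ is measurable; prior $\Pi_n=\sum_m\alpha_{n,m}\Pi_{n,m}$ with $(\alpha_{n,m})$ a probability vector and $\Pi_{n,m}$ a probability measure on $\Theta_{n,m}$; $\mathbb{V}_{n,m}$ are sets of probability measures on $\Theta_{n,m}$. Posterior: $\Pi_n(\mathcal{T}\mid Y^{(n)})\propto\int_{\mathcal{T}}q_n(T_n(\theta),Y^{(n)})d\Pi_n(\theta)$. Objective: $\mathcal{E}(\Xi,\Pi,q_n,Y^{(n)})=-\int\log q_n(T_n(\theta),Y^{(n)})d\Xi(\theta)+\mathrm{KL}(\Xi,\Pi)$. *)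

(* Defs.v *)
From HB Require Import structures.
From mathcomp Require Import all_boot all_order all_algebra.
From mathcomp Require Import all_classical all_reals all_analysis.
Set Implicit Arguments. Unset Strict Implicit. Unset Printing Implicit Defensive.
Import Order.TTheory GRing.Theory Num.Theory.
Local Open Scope classical_set_scope.
Local Open Scope ring_scope.
Local Open Scope ereal_scope.

(* Kullback-Leibler divergence KL(P, Q):
   if P << Q with a (nonnegative, measurable) density f = dP/dQ, then
   KL(P,Q) = \int f log f dQ  (with 0 log 0 = 0, mathcomp's ln 0 = 0);
   otherwise KL(P,Q) = +oo.  The density is Q-a.e. unique, so the choice
   of f does not matter. *)
Definition has_density d (T : measurableType d) (R : realType)
    (P Q : set T -> \bar R) (f : T -> R) : Prop :=
  [/\ measurable_fun setT f, (forall x, (0 <= f x)%R) &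
      forall A, measurable A -> P A = \int[Q]_(x in A) (f x)%:E].

Definition KL d (T : measurableType d) (R : realType)
    (P Q : set T -> \bar R) : \bar R :=
  match pselect (exists f, has_density P Q f) with
  | left h => let f := projT1 (cid h) in
              \int[Q]_x (f x * ln (f x))%:E
  | right _ => +oo
  end.

Definition elog (R : realType) (x : R) : \bar R :=
  if (0 < x)%R then (ln x)%:E else -oo.

Definition objE d (Th : measurableType d) (R : realType) (Lam Yt : Type)
    (T : Th -> Lam) (q : Lam -> Yt -> R) (y : Yt)
    (Xi Pi : set Th -> \bar R) : \bar R :=
  - (\int[Xi]_th elog (q (T th) y)) + KL Xi Pi.

(* Main.v *)
Require Import Defs.
From HB Require Import structures.
From mathcomp Require Import all_boot all_order all_algebra.
From mathcomp Require Import all_classical all_reals all_analysis.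
From mathcomp Require Import ring lra.
From mathcomp Require Import measurable_realfun.
Import Order.TTheory GRing.Theory Num.Theory.
Local Open Scope classical_set_scope.
Local Open Scope ring_scope.
Local Open Scope ereal_scope.

Section RealPart.
Local Open Scope ring_scope.
Context {R : realType}.

Lemma ndecr_ab (f : R -> R) (a b : R) : 0 < a -> a <= b ->
  (forall x, 0 < x -> derivable f x 1) ->
  (forall x, a < x < b -> 0 <= derive1 f x) -> f a <= f b.
Proof.
move=> a0 ab df d0.
apply: (@ger0_derive1_ndecr R f a b) => //.
- move=> x /[!in_itv] /= /andP[ax _]; apply: df; lra.
- apply: derivable_within_continuous => x /[!in_itv] /= /andP[ax _].
  apply: df; lra.
Qed.

Lemma nincr_ab (f : R -> R) (a b : R) : 0 < a -> a <= b ->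
  (forall x, 0 < x -> derivable f x 1) ->
  (forall x, a < x < b -> derive1 f x <= 0) -> f b <= f a.
Proof.
move=> a0 ab df d0.
apply: (@ler0_derive1_nincr R f a b) => //.
- move=> x /[!in_itv] /= /andP[ax _]; apply: df; lra.
- apply: derivable_within_continuous => x /[!in_itv] /= /andP[ax _].
  apply: df; lra.
Qed.

Definition G (t : R) := (t + 1) * ln t - 2 * (t - 1).
Lemma G_der (x : R) : 0 < x -> is_derive x 1 G (ln x + (x+1) * x^-1 - 2).
Proof.
move=> x0.
have -> : G = ((@id R + cst 1) * (@ln R) - (cst 2 * (@id R - cst 1))).
  by apply/funext => t; rewrite /G.
have hl := is_derive1_ln x0.
apply: is_derive_eq.
rewrite /=. rewrite !scaler0 !subr0 !addr0.
change ((x+1) * x^-1 + ln x * 1 - (2 * 1) = ln x + (x + 1) / x - 2). ring.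
Qed.

Lemma ln_ge_1V (x : R) : 0 < x -> 1 - x^-1 <= ln x.
Proof.
move=> x0.
have h := @le_ln1Dx R (x^-1 - 1).
have : ln (1 + (x^-1 - 1)) <= x^-1 - 1 by apply: h; rewrite ltrBrDr addNr invr_gt0.
rewrite addrC subrK lnV ?posrE //; lra.
Qed.

Lemma G_sign (x : R) : 0 < x -> (x <= 1 -> G x <= 0) /\ (1 <= x -> 0 <= G x).
Proof.
move=> x0.
have dG : forall y, 0 < y -> derivable G y 1.
  by move=> y y0; have := G_der _ y0 => -[].
have G'0 : forall a b, 0 < a -> forall y, a < y < b -> 0 <= derive1 G y.
  move=> a b a0 y /andP[ay _]; have y0 : 0 < y by lra.
  rewrite derive1E (@derive_val _ _ _ _ _ _ _ (G_der _ y0)).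
  have := ln_ge_1V _ y0.
  have -> : (y + 1) * y^-1 = 1 + y^-1 by rewrite mulrDl mulfV ?gt_eqF // mul1r.
  lra.
have G1 : G 1 = 0 by rewrite /G ln1; ring.
split => hx.
- rewrite -G1; apply: ndecr_ab => //; exact: G'0.
- rewrite -G1; apply: ndecr_ab => //; exact: G'0.
Qed.

Definition F (t : R) := 2 * t * (t + 2) * ln t - (t - 1) * (5 * t + 1).
Lemma F_der (x : R) : 0 < x -> is_derive x 1 F (4 * G x).
Proof.
move=> x0.
have -> : F = ((cst 2 * @id R * (@id R + cst 2)) * (@ln R) - ((@id R - cst 1) * (cst 5 * @id R + cst 1))).
  by apply/funext => t; rewrite /F.
have hl := is_derive1_ln x0.
apply: is_derive_eq.
rewrite /=. rewrite !scaler0 ?subr0 ?addr0 ?add0r.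
change (2 * x * (x + 2) * x^-1 + ln x * ((2 * x) * 1 + (x + 2) * (2 * 1)) - ((x - 1) * (5 * 1) + (5 * x + 1) * 1) = 4 * G x).
rewrite /G.
have -> : 2 * x * (x + 2) * x^-1 = 2 * (x + 2) by field; lra.
ring.
Qed.

Lemma F_ge0 (x : R) : 0 < x -> 0 <= F x.
Proof.
move=> x0.
have dF : forall y, 0 < y -> derivable F y 1.
  by move=> y y0; have := F_der _ y0 => -[].
have F1 : F 1 = 0 by rewrite /F ln1; ring.
rewrite -F1.
have [x1|x1] := leP x 1.
- apply: nincr_ab => // y /andP[xy y1]; have y0 : 0 < y by lra.
  rewrite derive1E (@derive_val _ _ _ _ _ _ _ (F_der _ y0)).
  have [+ _] := G_sign _ y0; move=> /(_ (ltW y1)); lra.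
- apply: ndecr_ab => //; first exact: ltW. move=> y /andP[xy y1]; have y0 : 0 < y by lra.
  rewrite derive1E (@derive_val _ _ _ _ _ _ _ (F_der _ y0)).
  have [_ +] := G_sign _ y0; move=> /(_ (ltW xy)); lra.
Qed.

Definition phi (t : R) := t * ln t - t + 1.

Lemma phi_key (t : R) : 0 <= t -> 3 * (t - 1) ^+ 2 <= 2 * (t + 2) * phi t.
Proof.
rewrite le0r => /orP[/eqP->|t0]; first by rewrite /phi ln0 //; lra.
have := F_ge0 _ t0; rewrite /F /phi => h.
nra.
Qed.

Lemma phi_ge0 (t : R) : 0 <= t -> 0 <= phi t.
Proof.
move=> t0; have := phi_key _ t0.
have := sqr_ge0 (t - 1).
case: (lerP 0 (phi t)) => // hn.
have : 2 * (t + 2) * phi t < 0 by rewrite pmulr_rlt0 //; lra.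
lra.
Qed.

Lemma pinsker_pt (t c : R) : 0 <= t -> 0 < c ->
  `|t - 1| <= c / 3 * (t + 2) + (2 * c)^-1 * phi t.
Proof.
move=> t0 c0.
have hk := phi_key _ t0. have hp := phi_ge0 _ t0.
have AB : 4 * (c / 3 * (t + 2)) * ((2 * c)^-1 * phi t) = 2 * (t + 2) * phi t / 3.
  by field; lra.
have A0 : 0 <= c / 3 * (t + 2) by apply: mulr_ge0; [apply: divr_ge0; lra | lra].
have B0 : 0 <= (2 * c)^-1 * phi t by apply: mulr_ge0 => //; rewrite invr_ge0; lra.
move: AB A0 B0.
set A := c / 3 * (t + 2). set B := (2 * c)^-1 * phi t => AB A0 B0.
clearbody A B.
have s2 : `|t - 1| ^+ 2 = (t - 1) ^+ 2 by rewrite real_normK // num_real.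
have e : (A + B) ^+ 2 = (A - B) ^+ 2 + 4 * A * B by ring.
have hw := sqr_ge0 (A - B).
have : `|t - 1| ^+ 2 <= (A + B) ^+ 2.
  rewrite s2 e AB; move: hk hw.
  set u := (t - 1) ^+ 2. set v := 2 * (t + 2) * phi t. set w := (A - B) ^+ 2.
  clearbody u v w. lra.
move=> h; rewrite -ler_sqr ?nnegrE //; lra.
Qed.
Lemma pinsker_pt' (t c : R) : 0 <= t -> 0 < c ->
  `|t - 1| <= (c / 3 - (2 * c)^-1) * t + (2 * c)^-1 * (t * ln t) + (2 * c / 3 + (2 * c)^-1).
Proof.
move=> t0 c0; have := pinsker_pt _ _ t0 c0; rewrite /phi.
suff -> : ((c / 3 - (2 * c)^-1) * t + (2 * c)^-1 * (t * ln t) +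
        (2 * c / 3 + (2 * c)^-1) = c / 3 * (t + 2) + (2 * c)^-1 * (t * ln t - t + 1)) by [].
by field; lra.
Qed.

Lemma coef_le (c y : R) : 0 < c ->
  c / 3 - (2 * c)^-1 + y + (2 * c / 3 + (2 * c)^-1) <= c + y.
Proof.
move=> c0; rewrite le_eqVlt; apply/orP; left; apply/eqP; field; lra.
Qed.

Lemma final_real (s k : R) : (0 <= s)%R ->
  (forall c : R, (0 < c)%R -> (s <= c + (2 * c)^-1 * k)%R) -> (s * s <= 2 * k)%R.
Proof.
move=> s0 H.
have [s00|spos] := eqVneq s 0.
  rewrite s00 mul0r.
  case: (lerP 0 k) => [k0|kneg]; first lra.
  pose c := (- k / (4 - k))%R.
  have c0 : (0 < c)%R by apply: divr_gt0; lra.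
  have c1 : (c < 1)%R by rewrite /c ltr_pdivrMr; lra.
  have e : (c + (2 * c)^-1 * k = c - (4 - k) / 2)%R.
    rewrite /c; field; lra.
  have := H c c0; rewrite e; lra.
have sp : (0 < s)%R by rewrite lt0r spos.
have := H (s / 2)%R ltac:(apply: divr_gt0 => //; lra).
have e : (s * (s / 2 + (2 * (s / 2))^-1 * k) = s * s / 2 + k)%R.
  by field; lra.
move=> h; have : (s * s <= s * (s / 2 + (2 * (s / 2))^-1 * k))%R.
  by rewrite ler_pM2l.
rewrite e; lra.
Qed.

End RealPart.

Section Key.
Local Open Scope ereal_scope.

Lemma key_lemma d (T : measurableType d) (R : realType) (P Q : probability T R)
  (M : countType) (Theta : M -> set T)
  (Theta_meas : forall m, measurable (Theta m))
  (Theta_disj : forall m m', m <> m' -> Theta m `&` Theta m' = set0)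
  (p q : M -> R)
  (hp : forall m, P (Theta m) = (p m)%:E)
  (hq : forall m, Q (Theta m) = (q m)%:E) :
  (\esum_(m in setT) (`|p m - q m|)%:E) * (\esum_(m in setT) (`|p m - q m|)%:E)
    <= 2%:E * KL P Q.
Proof.
set S := \esum_(m in setT) _.
have S0 : 0 <= S by apply: esum_ge0 => m _; rewrite lee_fin.
rewrite /KL; case: pselect => [hex|_]; last first.
  by rewrite gt0_muley ?lte_fin // leey.
set f := projT1 (cid hex).
have [fm f0 fP] : has_density P Q f := projT2 (cid hex).
set K := \int[Q]_x _.
have fmE : measurable_fun setT (fun x => (f x)%:E) by apply/measurable_EFinP.
have fint : forall D, measurable D -> Q.-integrable D (EFin \o f).
  move=> D mD; apply/integrableP; split; first exact: measurable_funTS.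
  rewrite (eq_integral (fun x => (f x)%:E)); last by move=> x _; rewrite /= ger0_norm.
  by rewrite -fP // (le_lt_trans (probability_le1 P mD)) ?ltry.
have intf1 : \int[Q]_x (f x)%:E = 1 by rewrite -fP // probability_setT.
have gm : measurable_fun setT (fun x => (`|f x - 1|)%:E).
  apply/measurable_EFinP; apply: measurableT_comp => //.
  by apply: measurable_funB => //.
have cell : forall m, (`|p m - q m|)%:E <= \int[Q]_(x in Theta m) (`|f x - 1|)%:E.
  move=> m.
  have mTm := Theta_meas m.
  have e : (p m - q m)%:E = \int[Q]_(x in Theta m) ((f x)%:E - (cst 1%R x)%:E).
    rewrite integralB_EFin //; try exact: fint; try exact: finite_measure_integrable_cst.
    rewrite (_ : \int[Q]_(x in Theta m) (cst 1%R x)%:E = Q (Theta m)); last first.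
      by rewrite (eq_integral (cst 1)) // integral_cst // mul1e.
    by rewrite -fP // hp hq.
  rewrite (_ : (`|p m - q m|)%:E = `|(p m - q m)%:E|) // e.
  apply: le_trans (le_abse_integral _ _ _) _ => //.
    apply: emeasurable_funB => //; first exact: measurable_funTS.
  by apply/measurable_EFinP; exact: measurable_cst.
have step1 : S <= \int[Q]_x (`|f x - 1|)%:E.
  rewrite /S /esum; apply: ge_ereal_sup => /= _ [X [finX _] <-].
  rewrite fsbig_finite //=.
  eapply le_trans; first by apply: lee_sum => i _; apply: cell.
  rewrite -(integral_bigsetU_EFin Q (F := Theta) (f := fun x => `|f x - 1|%R) (s := finmap.enum_fset (fset_set X))) //.
  - by apply: ge0_subset_integral => //; exact: bigsetU_measurable.
  - exact: (finmap.fset_uniq (fset_set X)).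
  - move=> i j _ _ [x [Fi Fj]]; apply: contrapT => ij.
    by have := Theta_disj i j ij; move/seteqP => [+ _] => /(_ x) /=; apply.
  - exact: measurable_funTS.
have main : forall c : R, (0 < c)%R -> S <= c%:E + ((2 * c)^-1)%:E * K.
  move=> c c0; apply: (le_trans step1).
  have [Koo|Kn] := eqVneq K +oo.
    by rewrite Koo gt0_muley ?lte_fin ?invr_gt0 ?mulr_gt0 // addey // leey.
  pose h x := (f x * ln (f x))%R.
  have KE0 : K = \int[Q]_x (EFin \o h) x by [].
  have hm : measurable_fun setT h.
    by apply: measurable_funM => //; apply: measurableT_comp => //; exact: measurable_ln.
  have hge : forall x, (-1 <= h x)%R.
    move=> x; have := phi_ge0 _ (f0 x); rewrite /phi /h; have := f0 x; lra.
  have hint : Q.-integrable setT (EFin \o h).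
    have mh' : measurable_fun setT (EFin \o h) by exact/measurable_EFinP.
    apply/integrableP; split => //.
    have hneg : \int[Q]_x (EFin \o h)^\- x <= 1.
      apply: (@le_trans _ _ (\int[Q]_x (cst 1 x))).
        apply: ge0_le_integral => //.
        - exact: measurable_funeneg.
        - move=> x _; rewrite funenegE /= ge_max lee01 andbT lee_fin.
          have := hge x; lra.
      by rewrite integral_cst // mul1e; apply: probability_le1.
    have nfin : \int[Q]_x (EFin \o h)^\- x \is a fin_num.
      by rewrite ge0_fin_numE ?integral_ge0 // (le_lt_trans hneg) ?ltry.
    have hpos : \int[Q]_x (EFin \o h)^\+ x < +oo.
      rewrite ltNge leye_eq; apply/negP => /eqP hpo.
      move: Kn; rewrite KE0 integralE hpo addye ?eqxx //.
      by move: nfin; rewrite -fin_numN => /fin_numP[].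
    rewrite (eq_integral (fun x => (EFin \o h)^\+ x + (EFin \o h)^\- x)); last first.
      by move=> x _; have := congr1 (fun F => F x) (fune_abse (EFin \o h)).
    rewrite ge0_integralD //; [|exact: measurable_funepos|exact: measurable_funeneg].
    by rewrite lte_add_pinfty // (le_lt_trans hneg) // ltry.
  have KE : K = \int[Q]_x (EFin \o h) x by [].
  have Kfin : K \is a fin_num by rewrite KE; apply: integrable_fin_num.
  pose a1 := (c / 3 - (2 * c)^-1)%R.
  pose a2 := ((2 * c)^-1)%R.
  pose a3 := (2 * c / 3 + (2 * c)^-1)%R.
  have le1 : \int[Q]_x (`|f x - 1|)%:E <=
      \int[Q]_x (a1%:E * (f x)%:E + a2%:E * (h x)%:E + a3%:E).
    apply: ge0_le_integral => //.
    - rewrite (_ : (fun x => _) = EFin \o (fun x => a1 * f x + a2 * h x + a3)%R); last first.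
        by apply/funext => x; rewrite /= -!EFinM -!EFinD.
      apply/measurable_EFinP; apply: measurable_funD => //.
      by apply: measurable_funD; apply: measurable_funM.
    - move=> x _; rewrite -!EFinM -!EFinD lee_fin.
      exact: pinsker_pt' (f0 x) c0.
  apply: (le_trans le1).
  have fi : Q.-integrable setT (EFin \o f) by apply: fint.
  rewrite integralD //; last 2 first.
    by apply: integrableD => //; apply: integrableZl.
    exact: finite_measure_integrable_cst.
  rewrite integralD //; try by apply: integrableZl.
  rewrite integralZl // integralZl // intf1 -KE.
  rewrite (eq_integral (cst a3%:E)) // integral_cst //.
  set u := (X in _ + _ * X <= _).
  have -> : u = 1 by rewrite /u; exact: probability_setT.
  rewrite -(fineK Kfin) -!EFinM -!EFinD lee_fin /a1 /a3 !mulr1.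
  exact: coef_le.
have [Koo|Kn] := eqVneq K +oo.
  by rewrite Koo gt0_muley ?lte_fin // leey.
have Kfin : K \is a fin_num.
  rewrite fin_numE Kn andbT; apply/negP => /eqP KNy.
  have := main 1%R ltr01; rewrite KNy gt0_muleNy ?lte_fin ?invr_gt0 // addeNy.
  by rewrite leeNy_eq => /eqP S0'; move: S0; rewrite S0'.
have Sfin : S \is a fin_num.
  rewrite ge0_fin_numE //; apply: (le_lt_trans (main 1%R ltr01)).
  by rewrite -(fineK Kfin) -EFinM -EFinD ltry.
move: main; rewrite -(fineK Kfin) -(fineK Sfin) => main.
rewrite -!EFinM lee_fin; apply: final_real.
  by rewrite fine_ge0.
by move=> c c0; have := main c c0; rewrite -EFinM -EFinD lee_fin.
Qed.
End Key.
Arguments key_lemma {d T R P Q M Theta} _ _ {p q} _ _.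

Theorem proposition2p2
  (R : realType)
  (* observation space (Y_n, mu_n), parameter space Lambda_n, likelihood q_n *)
  (dY : measure_display) (Yt : measurableType dY) (mu : {measure set Yt -> \bar R})
  (dL : measure_display) (Lam : measurableType dL)
  (q : Lam -> Yt -> R)
  (mu_sfin : sigma_finite setT mu)
  (q_ge0 : forall l y, (0 <= q l y)%R)
  (q_meas : measurable_fun setT (fun p : Lam * Yt => q p.1 p.2))
  (q_dens : forall l, \int[mu]_y (q l y)%:E = 1)
  (* disjoint parameter spaces Theta_{n,m}, m in a countable M_n, covering Theta *)
  (M : countType)
  (dT : measure_display) (Th : measurableType dT)
  (Theta : M -> set Th)
  (Theta_meas : forall m, measurable (Theta m))
  (Theta_disj : forall m m', m <> m' -> Theta m `&` Theta m' = set0)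
  (Theta_cover : \bigcup_m Theta m = setT)
  (T : Th -> Lam) (T_meas : measurable_fun setT T)
  (* prior Pi_n = sum_m alpha_m Pi_{n,m} *)
  (alpha : M -> R) (alpha_ge0 : forall m, (0 <= alpha m)%R)
  (alpha_sum : \esum_(m in setT) (alpha m)%:E = 1)
  (Pim : M -> probability Th R)
  (Pim_supp : forall m, Pim m (~` Theta m) = 0)
  (Pi : probability Th R)
  (Pi_def : forall A, measurable A -> Pi A = \esum_(m in setT) (alpha m)%:E * Pim m A)
  (* observed data Y^(n) and posterior Pi_n( . | Y^(n)) *)
  (y : Yt)
  (Zpost := \int[Pi]_th (q (T th) y)%:E)
  (Zpost_pos : 0 < Zpost) (Zpost_fin : Zpost < +oo)
  (post : probability Th R)
  (post_def : forall A, measurable A ->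
     post A = (\int[Pi]_(th in A) (q (T th) y)%:E) * ((fine Zpost)^-1)%:E)
  (* variational families V_{n,m} of probability measures on Theta_{n,m} *)
  (V : M -> set (probability Th R))
  (V_supp : forall m Xi, V m Xi -> Xi (~` Theta m) = 0)
  (* Xi_hat_{n,m} in argmin_{Xi in V_{n,m}} E(Xi, Pi_{n,m}, q_n, Y^(n)) *)
  (Xim : M -> probability Th R)
  (Xim_in : forall m, V m (Xim m))
  (Xim_min : forall m Xi, V m Xi ->
     objE T q y (Xim m) (Pim m) <= objE T q y Xi (Pim m))
  (* gamma_hat_{n,m} propto alpha_m exp(-E(Xi_hat_m, Pi_m, q_n, Y)), normalized *)
  (Zgam := \esum_(k in setT) (alpha k)%:E * expeR (- objE T q y (Xim k) (Pim k)))
  (Zgam_pos : 0 < Zgam) (Zgam_fin : Zgam < +oo)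
  (gam : M -> R)
  (gam_def : forall m, (gam m)%:E =
     (alpha m)%:E * expeR (- objE T q y (Xim m) (Pim m)) * ((fine Zgam)^-1)%:E)
  (* Xi_hat_n = sum_m gamma_hat_{n,m} Xi_hat_{n,m} *)
  (Xi : probability Th R)
  (Xi_def : forall A, measurable A -> Xi A = \esum_(m in setT) (gam m)%:E * Xim m A) :
  let alpha_hat := fun m => fine (post (Theta m)) in
  let S := \esum_(m in setT) (`| gam m - alpha_hat m |)%:E in
  S * S <= 2%:E * KL Xi post.
Proof.
cbv zeta.
set ahat := fun m => fine (post (Theta m)).
have gam_ge0 : forall m, (0 <= gam m)%R.
  move=> m; rewrite -lee_fin gam_def.
  have Zg : (0 < fine Zgam)%R by apply: fine_gt0; rewrite Zgam_pos Zgam_fin.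
  apply: mule_ge0; last by rewrite lee_fin invr_ge0 ltW.
  apply: mule_ge0; first by rewrite lee_fin.
  exact: expeR_ge0.
have Xim0 : forall k m, k <> m -> Xim k (Theta m) = 0.
  move=> k m km; apply/eqP; rewrite eq_le measure_ge0 andbT.
  rewrite -(V_supp k (Xim k) (Xim_in k)); apply: le_measure.
  - by rewrite inE.
  - by rewrite inE; apply: measurableC.
  - move=> x Tm Tk; have := Theta_disj k m km.
    by move/seteqP => [+ _] => /(_ x) /=; apply.
have Xim1 : forall m, Xim m (Theta m) = 1.
  move=> m; have := V_supp m (Xim m) (Xim_in m).
  rewrite probability_setC //.
  rewrite -(fineK (fin_num_measure (Xim m) _ (Theta_meas m))).
  by rewrite -EFinB => -[] /eqP; rewrite subr_eq0 => /eqP <-.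
have XiTh : forall m, Xi (Theta m) = (gam m)%:E.
  move=> m; rewrite Xi_def // (esumID [set m]); last first.
    by move=> k _; apply: mule_ge0; [rewrite lee_fin|].
  rewrite [X in _ + X]esum1 ?adde0; last first.
    by move=> k [_ km]; rewrite (Xim0 k m km) mule0.
  by rewrite setTI esum_set1 Xim1 ?mule1 // lee_fin.
have postTh : forall m, post (Theta m) = (ahat m)%:E.
  by move=> m; rewrite /ahat fineK // fin_num_measure.
exact: (key_lemma Theta_meas Theta_disj XiTh postTh).
Qed.
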